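(* Let $Q=\triangle ABC$ be a triangle with angle $\pi/n$ at $A$ and angle $m\pi/n$ at $B$, where $n$ is even and $m$ is a positive integer with $m<n-1$. Then there is no billiard trajectory in $Q$ starting at $A$ and returning to $A$.
   Context: A billiard trajectory in a polygon is a path of straight segments inside the polygon reflecting off the interiors of edges with angle of incidence equal to angle of reflection; here it emanates from the vertex $A$, and a trajectory returning to $A$ means one whose endpoint is $A$ (trajectories stop when they hit a vertex). *)

(* Defs.v *)
From Stdlib Require Import Reals Lra.
Open Scope R_scope.

Definition pt := (R * R)%type.
Definition vadd (p q : pt) : pt := (fst p + fst q, snd p + snd q).
Definition vsub (p q : pt) : pt := (fst p - fst q, snd p - snd q).
Definition vscale (a : R) (p : pt) : pt := (a * fst p, a * snd p).
Definition dot (p q : pt) : R := fst p * fst q + snd p * snd q.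
Definition vnorm (p : pt) : R := sqrt (dot p p).

Definition nondegenerate (A B C : pt) : Prop :=
  (fst B - fst A) * (snd C - snd A) - (snd B - snd A) * (fst C - fst A) <> 0.

Definition angle_at (X Y Z : pt) : R :=
  acos (dot (vsub Y X) (vsub Z X) / (vnorm (vsub Y X) * vnorm (vsub Z X))).

Definition in_open_triangle (A B C P : pt) : Prop :=
  exists a b c : R, 0 < a /\ 0 < b /\ 0 < c /\ a + b + c = 1 /\
    P = vadd (vadd (vscale a A) (vscale b B)) (vscale c C).

Definition in_open_segment (X Y P : pt) : Prop :=
  exists t : R, 0 < t < 1 /\ P = vadd (vscale (1 - t) X) (vscale t Y).

Definition reflect_dir (e d : pt) : pt :=
  vsub (vscale (2 * dot d e / dot e e) e) d.

(* At P, lying in the interior of edge [X,Y], the trajectory arriving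
   from Pprev leaves towards Pnext with angle of incidence equal to angle
   of reflection. *)
Definition reflects_at (X Y Pprev P Pnext : pt) : Prop :=
  in_open_segment X Y P /\
  exists lam : R, 0 < lam /\
    vsub Pnext P = vscale lam (reflect_dir (vsub Y X) (vsub P Pprev)).

(* A billiard trajectory in triangle ABC with k segments, given by its
   points p 0, ..., p k: it starts at A, each segment (open) lies in the
   interior of the triangle, each intermediate point p i (0 < i < k) lies
   in the interior of an edge (so not a vertex: the trajectory has not
   stopped) and the reflection law holds there. *)
Definition billiard_path (A B C : pt) (k : nat) (p : nat -> pt) : Prop :=
  (1 <= k)%nat /\ p 0%nat = A /\
  (forall i : nat, (i < k)%nat ->
     forall P, in_open_segment (p i) (p (S i)) P -> in_open_triangle A B C P) /\
  (forall i : nat, (0 < i)%nat -> (i < k)%nat ->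
     reflects_at A B (p (i - 1)%nat) (p i) (p (S i)) \/
     reflects_at B C (p (i - 1)%nat) (p i) (p (S i)) \/
     reflects_at C A (p (i - 1)%nat) (p i) (p (S i))).

(* Main.v *)
Require Import Defs.
From Stdlib Require Import Reals Arith Lra Lia ZArith.
Open Scope R_scope.

Lemma cos_eq_1_k (x : R) : cos x = 1 -> exists k : Z, x = IZR k * (2 * PI).
Proof.
  intro H.
  assert (Hs : sin (x/2) = 0).
  { assert (E : cos (2 * (x/2)) = 1 - 2 * sin (x/2) * sin (x/2)) by apply cos_2a_sin.
    replace (2 * (x/2)) with x in E by field. nra. }
  destruct (sin_eq_0_0 _ Hs) as [k Hk]. exists k. lra.
Qed.

Lemma pt_eq (p q : pt) : fst p = fst q -> snd p = snd q -> p = q.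
Proof. destruct p, q; simpl; intros; subst; auto. Qed.

Definition cross (u v : pt) : R := fst u * snd v - snd u * fst v.

Definition wv (e f : pt) (t : R) : pt := vadd (vscale (cos t) e) (vscale (sin t) f).

Lemma dot_scale (a b : R) (u v : pt) : dot (vscale a u) (vscale b v) = a * b * dot u v.
Proof. destruct u, v; unfold dot, vscale; simpl; ring. Qed.

Lemma dot_scale_l (a : R) (u v : pt) : dot (vscale a u) v = a * dot u v.
Proof. destruct u, v; unfold dot, vscale; simpl; ring. Qed.

Section Frame.
Variables e f : pt.
Hypothesis He : dot e e = 1.
Hypothesis Hf : dot f f = 1.
Hypothesis Hef : dot e f = 0.

Lemma dot_w (a b : R) : dot (wv e f a) (wv e f b) = cos a * cos b + sin a * sin b.
Proof.
  replace (dot (wv e f a) (wv e f b)) with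
    (cos a * cos b * dot e e + (cos a * sin b + sin a * cos b) * dot e f + sin a * sin b * dot f f).
  - rewrite He, Hf, Hef; ring.
  - destruct e, f; unfold wv, dot, vadd, vscale; simpl; ring.
Qed.

Lemma dot_ww (a : R) : dot (wv e f a) (wv e f a) = 1.
Proof. rewrite dot_w. pose proof (sin2_cos2 a). unfold Rsqr in *. lra. Qed.

Lemma reflect_w (d c a b : R) : d <> 0 ->
  reflect_dir (vscale d (wv e f a)) (vscale c (wv e f b)) = vscale c (wv e f (2 * a - b)).
Proof.
  intro Hd. unfold reflect_dir.
  rewrite !dot_scale, dot_w, dot_ww.
  unfold wv.
  rewrite cos_minus, sin_minus, cos_2a_cos, sin_2a.
  destruct e as [e1 e2], f as [f1 f2].
  unfold vsub, vadd, vscale; simpl.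
  pose proof (sin2_cos2 a). unfold Rsqr in *.
  replace (2 * (c * d * (cos b * cos a + sin b * sin a)) / (d * d * 1)) with
    (2 * c * (cos b * cos a + sin b * sin a) / d) by (field; auto).
  apply pt_eq; simpl; field_simplify; auto;
  replace (sin a ^ 2) with (1 - cos a ^ 2) by nra; ring.
Qed.

Lemma w_eq (l1 l2 a b : R) : 0 < l1 -> 0 < l2 ->
  vscale l1 (wv e f a) = vscale l2 (wv e f b) -> exists k : Z, a - b = IZR k * (2 * PI).
Proof.
  intros H1 H2 H.
  assert (E1 : dot (vscale l1 (wv e f a)) (vscale l1 (wv e f a)) = dot (vscale l2 (wv e f b)) (vscale l2 (wv e f b))) by (rewrite H; auto).
  rewrite !dot_scale, !dot_ww in E1.
  assert (l1 = l2) by nra. subst l2.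
  assert (E2 : dot (vscale l1 (wv e f a)) (wv e f b) = dot (vscale l1 (wv e f b)) (wv e f b)) by (rewrite H; auto).
  rewrite !dot_scale_l, dot_ww, dot_w in E2.
  apply cos_eq_1_k. rewrite cos_minus. nra.
Qed.
End Frame.

Definition frm_e (u : pt) : pt := vscale (/ vnorm u) u.
Definition frm_f (s : R) (u : pt) : pt := (- s * snd (frm_e u), s * fst (frm_e u)).

Lemma vnorm_sq (u : pt) : vnorm u * vnorm u = dot u u.
Proof. unfold vnorm. apply sqrt_sqrt. destruct u; unfold dot; simpl; nra. Qed.

Lemma vnorm_pos (u : pt) : u <> (0,0) -> 0 < vnorm u.
Proof.
  intro H. unfold vnorm. apply sqrt_lt_R0. destruct u as [u1 u2]; unfold dot; simpl.
  destruct (Req_dec u1 0); destruct (Req_dec u2 0); subst; try (exfalso; auto; fail); nra.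
Qed.

Lemma lagrange (u v : pt) : dot u u * dot v v = (dot u v)^2 + (cross u v)^2.
Proof. destruct u, v; unfold dot, cross; simpl; ring. Qed.

Section G.
Variables (u z : pt) (s g : R).
Hypothesis Hu : u <> (0,0).
Hypothesis Hz : z <> (0,0).
Hypothesis Hs : s = 1 \/ s = -1.
Hypothesis Hcr : 0 < s * cross u z.
Hypothesis Hg : 0 < g < PI.
Hypothesis Hcos : cos g = dot u z / (vnorm u * vnorm z).

Lemma frame_ortho : dot (frm_e u) (frm_e u) = 1 /\ dot (frm_f s u) (frm_f s u) = 1 /\ dot (frm_e u) (frm_f s u) = 0.
Proof.
  pose proof (vnorm_pos u Hu) as P. pose proof (vnorm_sq u) as Q.
  destruct u as [u1 u2]. unfold frm_e, frm_f, dot, vscale in *; simpl in *.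
  set (L := vnorm (u1,u2)) in *. clearbody L.
  split; [|split].
  - field_simplify; [|lra]. replace (L^2) with (L*L) by ring. rewrite Q. field. nra.
  - destruct Hs; subst s; field_simplify; try lra; replace (L^2) with (L*L) by ring; rewrite Q; field; nra.
  - field. lra.
Qed.

Lemma frame_u : u = vscale (vnorm u) (wv (frm_e u) (frm_f s u) 0).
Proof.
  pose proof (vnorm_pos u Hu) as P.
  unfold wv; rewrite cos_0, sin_0.
  destruct u as [u1 u2]; unfold frm_e, frm_f, vadd, vscale; simpl.
  apply pt_eq; simpl; field; lra.
Qed.

Lemma frame_z : z = vscale (vnorm z) (wv (frm_e u) (frm_f s u) g).
Proof.
  pose proof (vnorm_pos u Hu) as P. pose proof (vnorm_sq u) as Q.
  pose proof (vnorm_pos z Hz) as Pz. pose proof (vnorm_sq z) as Qz.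
  pose proof (sin_gt_0 g (proj1 Hg) (proj2 Hg)) as Sg.
  pose proof (sin2_cos2 g) as SC. unfold Rsqr in SC.
  pose proof (lagrange u z) as L.
  assert (HX : vnorm z * cos g = dot u z / vnorm u).
  { rewrite Hcos. field. lra. }
  assert (HY : vnorm z * sin g = s * cross u z / vnorm u).
  { assert (E : (vnorm z * sin g)^2 = (s * cross u z / vnorm u)^2).
    { replace ((vnorm z * sin g)^2) with (vnorm z * vnorm z * (1 - cos g * cos g)) by nra.
      assert (Hc2 : cos g * cos g = dot u z ^2 / (dot u u * dot z z)).
      { rewrite Hcos, <- Q, <- Qz. field. lra. }
      rewrite Hc2, Qz.
      replace ((s * cross u z / vnorm u)^2) with (cross u z ^2 / (vnorm u * vnorm u)) by (destruct Hs; subst; field; lra).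
      rewrite Q.
      replace (dot u z ^ 2) with (dot u u * dot z z - cross u z ^2) by lra.
      field. split; nra. }
    assert (0 < s * cross u z / vnorm u) by (apply Rdiv_lt_0_compat; lra).
    assert (0 < vnorm z * sin g) by nra. nra. }
  unfold wv. destruct z as [z1 z2]. destruct u as [u1 u2].
  unfold frm_e, frm_f, vadd, vscale in *; simpl in *.
  apply pt_eq; simpl.
  - replace (vnorm (z1, z2) * (cos g * (/ vnorm (u1, u2) * u1) + sin g * (- s * (/ vnorm (u1, u2) * u2))))
      with ((vnorm (z1, z2) * cos g) * (/ vnorm (u1, u2) * u1) - (vnorm (z1, z2) * sin g) * (s * (/ vnorm (u1, u2) * u2))) by ring.
    rewrite HX, HY. unfold dot, cross in *; simpl in *.
    set (L1 := vnorm (u1,u2)) in *. clearbody L1.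
    match goal with |- _ = ?r => replace r with (((u1*z1+u2*z2)*u1 - s*s*(u1*z2-u2*z1)*u2)/(L1*L1)) by (field; lra) end.
    rewrite Q. destruct Hs; subst s; field; nra.
  - replace (vnorm (z1, z2) * (cos g * (/ vnorm (u1, u2) * u2) + sin g * (s * (/ vnorm (u1, u2) * u1))))
      with ((vnorm (z1, z2) * cos g) * (/ vnorm (u1, u2) * u2) + (vnorm (z1, z2) * sin g) * (s * (/ vnorm (u1, u2) * u1))) by ring.
    rewrite HX, HY. unfold dot, cross in *; simpl in *.
    set (L1 := vnorm (u1,u2)) in *. clearbody L1.
    match goal with |- _ = ?r => replace r with (((u1*z1+u2*z2)*u2 + s*s*(u1*z2-u2*z1)*u1)/(L1*L1)) by (field; lra) end.
    rewrite Q. destruct Hs; subst s; field; nra.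
Qed.
End G.

Lemma tri_inv A B C P : in_open_triangle A B C P ->
  exists a b c, 0 < a /\ 0 < b /\ 0 < c /\ a + b + c = 1 /\
   fst P = a * fst A + b * fst B + c * fst C /\ snd P = a * snd A + b * snd B + c * snd C.
Proof.
  intros (a & b & c & Ha & Hb & Hc & Hs & E). exists a, b, c. subst P.
  unfold vadd, vscale; simpl. repeat split; auto; ring.
Qed.

Lemma seg_inv X Y P : in_open_segment X Y P ->
  exists t, 0 < t < 1 /\ fst P = (1 - t) * fst X + t * fst Y /\ snd P = (1 - t) * snd X + t * snd Y.
Proof.
  intros (t & Ht & E). exists t. subst P. unfold vadd, vscale; simpl. repeat split; try lra; ring.
Qed.

Lemma prod0 c D : c <> 0 -> c * D = 0 -> D = 0.
Proof. intros Hc H. apply Rmult_integral in H. destruct H; [contradiction|auto]. Qed.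

Ltac lin H := clear - H; ring_simplify in H; ring_simplify; lra.

Lemma tri_cross a1 a2 b1 b2 c1 c2 p1 p2 :
  (b1 - a1) * (c2 - a2) - (b2 - a2) * (c1 - a1) <> 0 ->
  in_open_triangle (a1,a2) (b1,b2) (c1,c2) (p1,p2) ->
  exists a b c, 0 < a /\ 0 < b /\ 0 < c /\
   (b1 - a1) * (p2 - a2) - (b2 - a2) * (p1 - a1) = c * ((b1 - a1) * (c2 - a2) - (b2 - a2) * (c1 - a1)) /\
   (c1 - a1) * (p2 - a2) - (c2 - a2) * (p1 - a1) = - b * ((b1 - a1) * (c2 - a2) - (b2 - a2) * (c1 - a1)) /\
   (c1 - b1) * (p2 - b2) - (c2 - b2) * (p1 - b1) = a * ((b1 - a1) * (c2 - a2) - (b2 - a2) * (c1 - a1)).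
Proof.
  intros ND H. destruct (tri_inv _ _ _ _ H) as (a&b&c&Ha&Hb&Hc&Hs&E1&E2). simpl in *.
  exists a, b, c. repeat split; auto.
  - rewrite E1, E2. replace a with (1 - b - c) by lra. ring.
  - rewrite E1, E2. replace a with (1 - b - c) by lra. ring.
  - rewrite E1, E2. replace c with (1 - b - a) by lra. ring.
Qed.

Lemma notri_A (A B C : pt) (ND : nondegenerate A B C) : ~ in_open_triangle A B C A.
Proof.
  intro H. destruct A as [a1 a2], B as [b1 b2], C as [c1 c2]. unfold nondegenerate in ND; simpl in ND.
  destruct (tri_cross _ _ _ _ _ _ _ _ ND H) as (a&b&c&Ha&Hb&Hc&K1&K2&K3).
  apply ND. eapply prod0 with c; [lra|]. rewrite <- K1. ring.
Qed.

Lemma notri_AB (A B C : pt) (ND : nondegenerate A B C) P : in_open_segment A B P -> ~ in_open_triangle A B C P.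
Proof.
  intros H1 H. destruct A as [a1 a2], B as [b1 b2], C as [c1 c2], P as [p1 p2].
  unfold nondegenerate in ND; simpl in ND.
  destruct (tri_cross _ _ _ _ _ _ _ _ ND H) as (a&b&c&Ha&Hb&Hc&K1&K2&K3).
  destruct (seg_inv _ _ _ H1) as (t&Ht&F1&F2). simpl in *.
  apply ND. eapply prod0 with c; [lra|]. rewrite <- K1. rewrite F1, F2. ring.
Qed.

Lemma notri_BC (A B C : pt) (ND : nondegenerate A B C) P : in_open_segment B C P -> ~ in_open_triangle A B C P.
Proof.
  intros H1 H. destruct A as [a1 a2], B as [b1 b2], C as [c1 c2], P as [p1 p2].
  unfold nondegenerate in ND; simpl in ND.
  destruct (tri_cross _ _ _ _ _ _ _ _ ND H) as (a&b&c&Ha&Hb&Hc&K1&K2&K3).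
  destruct (seg_inv _ _ _ H1) as (t&Ht&F1&F2). simpl in *.
  apply ND. eapply prod0 with a; [lra|]. rewrite <- K3. rewrite F1, F2. ring.
Qed.

Lemma notri_CA (A B C : pt) (ND : nondegenerate A B C) P : in_open_segment C A P -> ~ in_open_triangle A B C P.
Proof.
  intros H1 H. destruct A as [a1 a2], B as [b1 b2], C as [c1 c2], P as [p1 p2].
  unfold nondegenerate in ND; simpl in ND.
  destruct (tri_cross _ _ _ _ _ _ _ _ ND H) as (a&b&c&Ha&Hb&Hc&K1&K2&K3).
  destruct (seg_inv _ _ _ H1) as (t&Ht&F1&F2). simpl in *.
  apply ND. eapply prod0 with (- b); [lra|]. rewrite <- K2. rewrite F1, F2. ring.
Qed.

Lemma edges_AB_BC (A B C : pt) (ND : nondegenerate A B C) P : in_open_segment A B P -> in_open_segment B C P -> False.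
Proof.
  intros H1 H2. destruct A as [a1 a2], B as [b1 b2], C as [c1 c2], P as [p1 p2].
  unfold nondegenerate in ND; simpl in ND.
  destruct (seg_inv _ _ _ H1) as (t&Ht&E1&E2).
  destruct (seg_inv _ _ _ H2) as (s&Hs&F1&F2). simpl in *.
  apply ND. eapply prod0 with s; [lra|].
  transitivity ((b1 - a1) * (p2 - a2) - (b2 - a2) * (p1 - a1)).
  - rewrite F1, F2. ring.
  - rewrite E1, E2. ring.
Qed.

Lemma edges_AB_CA (A B C : pt) (ND : nondegenerate A B C) P : in_open_segment A B P -> in_open_segment C A P -> False.
Proof.
  intros H1 H2. destruct A as [a1 a2], B as [b1 b2], C as [c1 c2], P as [p1 p2].
  unfold nondegenerate in ND; simpl in ND.
  destruct (seg_inv _ _ _ H1) as (t&Ht&E1&E2).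
  destruct (seg_inv _ _ _ H2) as (s&Hs&F1&F2). simpl in *.
  apply ND. eapply prod0 with (1 - s); [lra|].
  transitivity ((b1 - a1) * (p2 - a2) - (b2 - a2) * (p1 - a1)).
  - rewrite F1, F2. ring.
  - rewrite E1, E2. ring.
Qed.

Lemma edges_BC_CA (A B C : pt) (ND : nondegenerate A B C) P : in_open_segment B C P -> in_open_segment C A P -> False.
Proof.
  intros H1 H2. destruct A as [a1 a2], B as [b1 b2], C as [c1 c2], P as [p1 p2].
  unfold nondegenerate in ND; simpl in ND.
  destruct (seg_inv _ _ _ H1) as (t&Ht&E1&E2).
  destruct (seg_inv _ _ _ H2) as (s&Hs&F1&F2). simpl in *.
  apply ND. eapply prod0 with (-(1 - t)); [lra|].
  transitivity ((c1 - a1) * (p2 - a2) - (c2 - a2) * (p1 - a1)).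
  - rewrite E1, E2. ring.
  - rewrite F1, F2. ring.
Qed.

Lemma cos_angle u v g : u <> (0,0) -> v <> (0,0) ->
  acos (dot u v / (vnorm u * vnorm v)) = g -> cos g = dot u v / (vnorm u * vnorm v).
Proof.
  intros Hu Hv H. subst g. apply cos_acos.
  pose proof (vnorm_pos u Hu). pose proof (vnorm_pos v Hv).
  pose proof (vnorm_sq u). pose proof (vnorm_sq v). pose proof (lagrange u v).
  assert (Hd : (dot u v)^2 <= (vnorm u * vnorm v)^2).
  { replace ((vnorm u * vnorm v)^2) with (dot u u * dot v v) by nra. nra. }
  assert (0 < vnorm u * vnorm v) by nra.
  set (N := vnorm u * vnorm v) in *. set (d := dot u v) in *.
  split.
  - apply (Rmult_le_reg_r N); auto. unfold Rdiv. rewrite Rmult_assoc, Rinv_l by lra. nra.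
  - apply (Rmult_le_reg_r N); auto. unfold Rdiv. rewrite Rmult_assoc, Rinv_l by lra. nra.
Qed.

Lemma nz_of_cross u v : cross u v <> 0 -> u <> (0,0) /\ v <> (0,0).
Proof.
  intro H. split; intro E; apply H; rewrite E; unfold cross; simpl; ring.
Qed.

Lemma setup (n m : nat) A B C : (1 <= m)%nat -> (m < n - 1)%nat -> nondegenerate A B C ->
  angle_at A B C = PI / INR n -> angle_at B C A = INR m * PI / INR n ->
  exists e f Lu Lv Lw, dot e e = 1 /\ dot f f = 1 /\ dot e f = 0 /\
    0 < Lu /\ 0 < Lv /\ 0 < Lw /\
    vsub B A = vscale Lu (wv e f 0) /\
    vsub C A = vscale Lv (wv e f (PI / INR n)) /\
    vsub C B = vscale Lw (wv e f (PI - INR m * PI / INR n)).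
Proof.
  intros Hm1 Hm2 ND HA HB.
  set (u := vsub B A). set (v := vsub C A). set (z := vsub C B).
  assert (HD : cross u v <> 0) by (unfold nondegenerate in ND; exact ND).
  assert (HDz : cross u z = cross u v).
  { unfold u, v, z, cross, vsub; simpl; ring. }
  destruct (nz_of_cross u v HD) as [Hu Hv].
  destruct (nz_of_cross u z ltac:(rewrite HDz; auto)) as [_ Hz].
  set (s := if Rlt_dec 0 (cross u v) then 1 else -1).
  assert (Hs : s = 1 \/ s = -1) by (unfold s; destruct Rlt_dec; auto).
  assert (Hsc : 0 < s * cross u v).
  { unfold s; destruct Rlt_dec; [lra|]. assert (cross u v < 0) by lra. lra. }
  assert (Hn : (3 <= n)%nat) by lia.
  assert (HnR : 3 <= INR n) by (replace 3 with (INR 3) by (simpl; ring); apply le_INR; auto).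
  assert (HmR : 1 <= INR m) by (replace 1 with (INR 1) by (simpl; ring); apply le_INR; auto).
  assert (Hmn : INR m + 1 < INR n).
  { replace (INR m + 1) with (INR (S m)) by (rewrite S_INR; ring). apply lt_INR. lia. }
  pose proof PI_RGT_0 as Hpi.
  assert (Hg1 : 0 < PI / INR n < PI).
  { split. apply Rdiv_lt_0_compat; lra.
    apply (Rmult_lt_reg_r (INR n)); [lra|]. unfold Rdiv. rewrite Rmult_assoc, Rinv_l by lra. nra. }
  assert (Hg2 : 0 < PI - INR m * PI / INR n < PI).
  { assert (INR m * PI / INR n < PI).
    { apply (Rmult_lt_reg_r (INR n)); [lra|]. unfold Rdiv. rewrite Rmult_assoc, Rinv_l by lra. nra. }
    assert (0 < INR m * PI / INR n) by (apply Rdiv_lt_0_compat; nra).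
    lra. }
  assert (Hc1 : cos (PI / INR n) = dot u v / (vnorm u * vnorm v)).
  { apply cos_angle; auto. }
  assert (Hc2 : cos (PI - INR m * PI / INR n) = dot u z / (vnorm u * vnorm z)).
  { assert (Hw : vsub A B <> (0,0)).
    { intro E. apply Hu. unfold u. unfold vsub in *. injection E; intros. apply pt_eq; simpl; lra. }
    pose proof (cos_angle z (vsub A B) _ Hz Hw HB) as K.
    rewrite cos_minus, cos_PI, sin_PI, K.
    assert (E1 : dot z (vsub A B) = - dot u z) by (unfold z, u, dot, vsub; simpl; ring).
    assert (E2 : vnorm (vsub A B) = vnorm u).
    { unfold vnorm, u; f_equal; unfold dot, vsub; simpl; ring. }
    rewrite E1, E2. field. pose proof (vnorm_pos u Hu). pose proof (vnorm_pos z Hz). lra. }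
  exists (frm_e u), (frm_f s u), (vnorm u), (vnorm v), (vnorm z).
  destruct (frame_ortho u v s (PI / INR n) Hu Hs Hsc Hc1) as (O1 & O2 & O3).
  repeat split; auto.
  - apply vnorm_pos; auto.
  - apply vnorm_pos; auto.
  - apply vnorm_pos; auto.
  - apply (frame_u u v s (PI / INR n)); auto.
  - apply (frame_z u v s (PI / INR n)); auto.
  - apply (frame_z u z s); auto. rewrite HDz; auto.
Qed.


Lemma wv_expand (e f : pt) r t : vscale r (wv e f t) = vadd (vscale (r * cos t) e) (vscale (r * sin t) f).
Proof. destruct e, f; unfold wv, vadd, vscale; simpl; f_equal; ring. Qed.

Lemma polar x y : 0 < y -> exists r t, 0 < r /\ 0 < t < PI /\ r * cos t = x /\ r * sin t = y.
Proof.
  intro Hy.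
  set (r := sqrt (x*x + y*y)).
  assert (Hr2 : r * r = x*x + y*y) by (apply sqrt_sqrt; nra).
  assert (Hr : 0 < r) by (apply sqrt_lt_R0; nra).
  assert (Hxr : -1 < x / r < 1).
  { assert (x*x < r*r) by nra.
    split; apply (Rmult_lt_reg_r r); auto; unfold Rdiv; rewrite Rmult_assoc, Rinv_l by lra; nra. }
  exists r, (acos (x / r)).
  pose proof (acos_bound (x/r)) as Hb.
  assert (Hc : cos (acos (x/r)) = x / r) by (apply cos_acos; lra).
  assert (H0 : acos (x/r) <> 0) by (intro E; rewrite E, cos_0 in Hc; lra).
  assert (HP : acos (x/r) <> PI) by (intro E; rewrite E, cos_PI in Hc; lra).
  assert (Hs : 0 < sin (acos (x/r))) by (apply sin_gt_0; lra).
  pose proof (sin2_cos2 (acos (x/r))) as SC. unfold Rsqr in SC. rewrite Hc in SC.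
  repeat split; auto; try lra.
  - rewrite Hc. field. lra.
  - assert (E : (r * sin (acos (x/r))) * (r * sin (acos (x/r))) = y * y).
    { replace ((r * sin (acos (x/r))) * (r * sin (acos (x/r)))) with (r * r * (sin (acos (x / r)) * sin (acos (x / r)))) by ring.
      replace (sin (acos (x / r)) * sin (acos (x / r))) with (1 - x / r * (x / r)) by lra.
      rewrite <- (Rmult_1_r (r*r)) at 1. field_simplify; [|lra]. nra. }
    assert (0 < r * sin (acos (x/r))) by nra. nra.
Qed.

Lemma cone (e f : pt) g Lu Lv u v P Q :
  0 < g < PI -> 0 < Lu -> 0 < Lv ->
  u = vscale Lu (wv e f 0) -> v = vscale Lv (wv e f g) -> 0 < P -> 0 < Q ->
  exists r t, 0 < r /\ 0 < t < g /\ vadd (vscale P u) (vscale Q v) = vscale r (wv e f t).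
Proof.
  intros Hg HLu HLv Hu Hv HP HQ.
  pose proof (sin_gt_0 g (proj1 Hg) (proj2 Hg)) as Sg.
  destruct (polar (P * Lu + Q * Lv * cos g) (Q * Lv * sin g)) as (r & t & Hr & Ht & Hx & Hy).
  { apply Rmult_lt_0_compat; auto. apply Rmult_lt_0_compat; auto. }
  exists r, t. repeat split; auto; try lra.
  - destruct (Rlt_or_le t g) as [|Hle]; auto. exfalso.
    assert (K : sin (g - t) * r = sin g * (P * Lu)).
    { rewrite sin_minus. replace ((sin g * cos t - cos g * sin t) * r) with (sin g * (r * cos t) - cos g * (r * sin t)) by ring.
      rewrite Hx, Hy. ring. }
    assert (K2 : 0 <= sin (t - g)) by (apply sin_ge_0; lra).
    replace (t - g) with (- (g - t)) in K2 by ring. rewrite sin_neg in K2.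
    assert (0 < sin g * (P * Lu)) by (apply Rmult_lt_0_compat; nra).
    nra.
  - rewrite wv_expand, Hu, Hv, Hx, Hy. destruct e, f; unfold wv, vadd, vscale; simpl.
    rewrite cos_0, sin_0. f_equal; ring.
Qed.


Lemma seg_sym X Y P : in_open_segment X Y P -> in_open_segment Y X P.
Proof.
  intros (t & Ht & E). exists (1 - t). split; [lra|]. subst P.
  destruct X, Y; unfold vadd, vscale; simpl; f_equal; ring.
Qed.

Lemma bd A B C k p : nondegenerate A B C -> billiard_path A B C k p -> p k = A ->
  forall i, (i <= k)%nat -> ~ in_open_triangle A B C (p i).
Proof.
  intros ND (Hk & H0 & Hseg & Hrefl) Hpk i Hi.
  destruct (Nat.eq_dec i 0) as [->|Hi0]. { rewrite H0. apply notri_A; auto. }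
  destruct (Nat.eq_dec i k) as [->|Hik]. { rewrite Hpk. apply notri_A; auto. }
  destruct (Hrefl i ltac:(lia) ltac:(lia)) as [[S1 _]|[[S1 _]|[S1 _]]].
  - apply notri_AB; auto.
  - apply notri_BC; auto.
  - apply notri_CA; auto.
Qed.

Lemma mid_cone A B C Z : (forall P, in_open_segment A Z P -> in_open_triangle A B C P) ->
  exists b c, 0 < b /\ 0 < c /\ vsub Z A = vadd (vscale b (vsub B A)) (vscale c (vsub C A)).
Proof.
  intro H.
  destruct (tri_inv A B C (vadd (vscale (1 - /2) A) (vscale (/2) Z))) as (a&b&c&Ha&Hb&Hc&Hs&E1&E2).
  { apply H. exists (/2). split; [lra|auto]. }
  exists (2*b), (2*c). split; [lra|split; [lra|]].
  destruct A as [a1 a2], B as [b1 b2], C as [c1 c2], Z as [z1 z2].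
  unfold vadd, vscale, vsub in *; simpl in *.
  apply pt_eq; simpl.
  - replace a with (1 - b - c) in E1 by lra. lra.
  - replace a with (1 - b - c) in E2 by lra. lra.
Qed.

Lemma det (T : pt -> Prop) Y Z1 Z2 d l1 l2 : 0 < l1 -> 0 < l2 ->
  vsub Z1 Y = vscale l1 d -> vsub Z2 Y = vscale l2 d ->
  (forall P, in_open_segment Y Z1 P -> T P) -> (forall P, in_open_segment Y Z2 P -> T P) ->
  ~ T Z1 -> ~ T Z2 -> Z1 = Z2.
Proof.
  intros H1 H2 E1 E2 S1 S2 N1 N2.
  destruct Y as [y1 y2], Z1 as [a1 a2], Z2 as [b1 b2], d as [d1 d2].
  unfold vsub, vscale in *; simpl in *.
  injection E1 as E11 E12. injection E2 as E21 E22.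
  destruct (Rtotal_order l1 l2) as [Hlt|[Heq|Hgt]].
  - exfalso. apply N1. apply S2. exists (l1 / l2). split.
    + split. apply Rdiv_lt_0_compat; lra. apply (Rmult_lt_reg_r l2); auto.
      unfold Rdiv; rewrite Rmult_assoc, Rinv_l by lra; lra.
    + unfold vadd, vscale; simpl. apply pt_eq; simpl.
      * replace a1 with (y1 + l1 * d1) by lra. replace b1 with (y1 + l2 * d1) by lra. field. lra.
      * replace a2 with (y2 + l1 * d2) by lra. replace b2 with (y2 + l2 * d2) by lra. field. lra.
  - subst l2. apply pt_eq; simpl; lra.
  - exfalso. apply N2. apply S1. exists (l2 / l1). split.
    + split. apply Rdiv_lt_0_compat; lra. apply (Rmult_lt_reg_r l1); auto.
      unfold Rdiv; rewrite Rmult_assoc, Rinv_l by lra; lra.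
    + unfold vadd, vscale; simpl. apply pt_eq; simpl.
      * replace a1 with (y1 + l1 * d1) by lra. replace b1 with (y1 + l2 * d1) by lra. field. lra.
      * replace a2 with (y2 + l1 * d2) by lra. replace b2 with (y2 + l2 * d2) by lra. field. lra.
Qed.

Lemma refl_rev e a Y Z mu : dot e e <> 0 -> 0 < mu ->
  vsub a Y = vscale mu (reflect_dir e (vsub Y Z)) ->
  vsub Z Y = vscale (/ mu) (reflect_dir e (vsub Y a)).
Proof.
  intros He Hmu E.
  destruct e as [e1 e2], a as [a1 a2], Y as [y1 y2], Z as [z1 z2].
  unfold reflect_dir, vsub, vscale, dot in *; simpl in *.
  injection E as E1 E2.
  replace a1 with (y1 + mu * (2 * ((y1 - z1) * e1 + (y2 - z2) * e2) / (e1 * e1 + e2 * e2) * e1 - (y1 - z1))) by lra.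
  replace a2 with (y2 + mu * (2 * ((y1 - z1) * e1 + (y2 - z2) * e2) / (e1 * e1 + e2 * e2) * e2 - (y2 - z2))) by lra.
  apply pt_eq; simpl; field; split; lra.
Qed.

Lemma dot_pos (e : pt) : e <> (0,0) -> dot e e <> 0.
Proof.
  intros H E. apply H. destruct e as [e1 e2]; unfold dot in E; simpl in E.
  assert (e1 = 0) by nra. assert (e2 = 0) by nra. subst; auto.
Qed.


Fixpoint sg (i : nat) : R := match i with O => 1 | S j => - sg j end.

Lemma sg_cases i : (sg i = 1 /\ exists j, i = (2 * j)%nat) \/ (sg i = -1 /\ exists j, i = (2 * j + 1)%nat).
Proof.
  induction i as [|i IH].
  - left. split; [reflexivity|exists 0%nat; lia].
  - simpl. destruct IH as [[E [j Hj]]|[E [j Hj]]].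
    + right. split; [rewrite E; ring|exists j; lia].
    + left. split; [rewrite E; ring|exists (S j); lia].
Qed.

Definition dirok (e f : pt) (t0 N : R) (v : pt) (eps : R) : Prop :=
  exists c z, 0 < c /\ v = vscale c (wv e f (eps * t0 + 2 * PI * IZR z / N)).

Lemma scale_scale a b v : vscale a (vscale b v) = vscale (a * b) v.
Proof. destruct v; unfold vscale; simpl; f_equal; ring. Qed.

Lemma step_dir e f (He : dot e e = 1) (Hf : dot f f = 1) (Hef : dot e f = 0)
  t0 N edge d a q eps v lam w' :
  N <> 0 -> d <> 0 -> edge = vscale d (wv e f a) -> 2 * a = 2 * PI * IZR q / N ->
  dirok e f t0 N v eps -> 0 < lam -> w' = vscale lam (reflect_dir edge v) ->
  dirok e f t0 N w' (- eps).
Proof.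
  intros HN Hd Ee Hq (c & z & Hc & Ev) Hl Ew.
  subst edge v w'. rewrite (reflect_w e f He Hf Hef d c a _ Hd), scale_scale.
  exists (lam * c), (q - z)%Z. split; [nra|].
  f_equal. f_equal. rewrite Hq, minus_IZR. field. auto.
Qed.

Lemma w_shift (e f : pt) r t : vscale (- r) (wv e f t) = vscale r (wv e f (t + PI)).
Proof. destruct e, f; unfold wv, vadd, vscale; simpl. rewrite neg_cos, neg_sin. f_equal; ring. Qed.

Lemma dir_all (n m : nat) A B C k p e f Lu Lv Lw t0 r0 :
  dot e e = 1 -> dot f f = 1 -> dot e f = 0 -> (1 <= n)%nat ->
  0 < Lu -> 0 < Lv -> 0 < Lw ->
  vsub B A = vscale Lu (wv e f 0) ->
  vsub C A = vscale Lv (wv e f (PI / INR n)) ->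
  vsub C B = vscale Lw (wv e f (PI - INR m * PI / INR n)) ->
  billiard_path A B C k p -> 0 < r0 -> vsub (p 1%nat) (p 0%nat) = vscale r0 (wv e f t0) ->
  forall i, (i < k)%nat -> dirok e f t0 (INR n) (vsub (p (S i)) (p i)) (sg i).
Proof.
  intros He Hf Hef Hn HLu HLv HLw EAB EAC ECB (Hk & H0 & Hseg & Hrefl) Hr0 E1.
  assert (HN : INR n <> 0) by (apply not_0_INR; lia).
  assert (ECA : vsub A C = vscale Lv (wv e f (PI / INR n + PI))).
  { assert (X : vsub A C = vscale (-1) (vsub C A)) by (destruct A, C; unfold vsub, vscale; simpl; f_equal; ring).
    rewrite X, EAC, scale_scale. replace (-1 * Lv) with (- Lv) by ring. apply w_shift. }
  induction i as [|i IH]; intro Hi.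
  - exists r0, 0%Z. split; auto. rewrite E1. f_equal. f_equal. simpl. field. auto.
  - simpl sg.
    destruct (Hrefl (S i) ltac:(lia) ltac:(lia)) as [R|[R|R]];
    replace (S i - 1)%nat with i in R by lia; destruct R as [_ (lam & Hl & Ew)].
    + apply (step_dir e f He Hf Hef t0 (INR n) (vsub B A) Lu 0 0%Z (sg i) (vsub (p (S i)) (p i)) lam); auto.
      lra. simpl. field. auto. apply IH. lia.
    + apply (step_dir e f He Hf Hef t0 (INR n) (vsub C B) Lw (PI - INR m * PI / INR n) (Z.of_nat n - Z.of_nat m)%Z (sg i) (vsub (p (S i)) (p i)) lam); auto.
      lra. rewrite minus_IZR, <- !INR_IZR_INZ. field. auto. apply IH. lia.
    + apply (step_dir e f He Hf Hef t0 (INR n) (vsub A C) Lv (PI / INR n + PI) (1 + Z.of_nat n)%Z (sg i) (vsub (p (S i)) (p i)) lam); auto.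
      lra. rewrite plus_IZR, <- !INR_IZR_INZ. field. auto. apply IH. lia.
Qed.


Lemma nt (h : nat) t0 t1 eps (z K : Z) : (1 <= h)%nat ->
  0 < t0 < PI / INR (2 * h) -> 0 < t1 < PI / INR (2 * h) -> (eps = 1 \/ eps = -1) ->
  (t1 + PI) - (eps * t0 + 2 * PI * IZR z / INR (2 * h)) = IZR K * (2 * PI) ->
  eps = 1 /\ t1 = t0.
Proof.
  intros Hh H0 H1 Heps Heq.
  assert (HH : 1 <= INR h) by (replace 1 with (INR 1) by (simpl; ring); apply le_INR; auto).
  assert (HN : INR (2 * h) = 2 * INR h) by (rewrite mult_INR; simpl; ring).
  rewrite HN in *.
  pose proof PI_RGT_0 as Hpi.
  set (M := (K * 2 * Z.of_nat h - Z.of_nat h + z)%Z).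
  set (u := 2 * PI / (2 * INR h)).
  assert (Hu : 0 < u) by (unfold u; apply Rdiv_lt_0_compat; lra).
  assert (Hu2 : PI / (2 * INR h) = u / 2) by (unfold u; field; lra).
  rewrite Hu2 in *.
  assert (E' : IZR M * u = IZR K * (2 * PI) - PI + 2 * PI * IZR z / (2 * INR h)).
  { unfold M, u. rewrite plus_IZR, minus_IZR, !mult_IZR, <- INR_IZR_INZ. field. lra. }
  assert (E : t1 - eps * t0 = IZR M * u) by lra.
  destruct Heps as [-> | ->].
  - split; auto.
    assert (A1 : -1 < IZR M * 2 < 1).
    { split; apply (Rmult_lt_reg_r u); auto; nra. }
    assert (M = 0%Z).
    { assert (-1 < M)%Z by (apply lt_IZR; simpl; lra).
      assert (M < 1)%Z by (apply lt_IZR; simpl; lra). lia. }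
    rewrite H in E. simpl in E. lra.
  - exfalso.
    assert (A1 : 0 < IZR M < 1).
    { split; apply (Rmult_lt_reg_r u); auto; nra. }
    assert (0 < M)%Z by (apply lt_IZR; simpl; lra).
    assert (M < 1)%Z by (apply lt_IZR; simpl; lra). lia.
Qed.


Lemma pal_same (T : pt -> Prop) X1 X2 Pp Y Z1 Z2 : vsub X2 X1 <> (0,0) ->
  reflects_at X1 X2 Pp Y Z1 -> reflects_at X1 X2 Z2 Y Pp ->
  (forall P, in_open_segment Y Z1 P -> T P) -> (forall P, in_open_segment Y Z2 P -> T P) ->
  ~ T Z1 -> ~ T Z2 -> Z1 = Z2.
Proof.
  intros Hne [_ (l & Hl & E1)] [_ (mu & Hmu & E2)] S1 S2 N1 N2.
  pose proof (refl_rev _ _ _ _ _ (dot_pos _ Hne) Hmu E2) as E3.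
  apply (det T Y Z1 Z2 (reflect_dir (vsub X2 X1) (vsub Y Pp)) l (/ mu)); auto.
  apply Rinv_0_lt_compat; auto.
Qed.

Lemma nd_edges A B C : nondegenerate A B C ->
  vsub B A <> (0,0) /\ vsub C B <> (0,0) /\ vsub A C <> (0,0).
Proof.
  intro ND. destruct A as [a1 a2], B as [b1 b2], C as [c1 c2].
  unfold nondegenerate, vsub in *; simpl in *.
  split; [|split]; intro E; injection E; intros E1 E2; apply ND.
  - replace b1 with a1 by lra. replace b2 with a2 by lra. ring.
  - replace c1 with b1 by lra. replace c2 with b2 by lra. ring.
  - replace c1 with a1 by lra. replace c2 with a2 by lra. ring.
Qed.

Lemma palindrome A B C k p : nondegenerate A B C -> billiard_path A B C k p -> p k = A ->
  p 1%nat = p (k - 1)%nat ->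
  forall i, (i + 1 <= k)%nat -> p i = p (k - i)%nat /\ p (S i) = p (k - S i)%nat.
Proof.
  intros ND BP Hpk H1.
  pose proof (bd A B C k p ND BP Hpk) as Hbd.
  destruct BP as (Hk & H0 & Hseg & Hrefl).
  destruct (nd_edges A B C ND) as (N1 & N2 & N3).
  induction i as [|i IH]; intro Hi.
  - split. rewrite H0, Nat.sub_0_r, Hpk; auto. exact H1.
  - destruct (IH ltac:(lia)) as [IH1 IH2]. split; [exact IH2|].
    set (Y := p (S i)) in *.
    assert (R1 := Hrefl (S i) ltac:(lia) ltac:(lia)).
    replace (S i - 1)%nat with i in R1 by lia.
    assert (R2 := Hrefl (k - S i)%nat ltac:(lia) ltac:(lia)).
    replace (k - S i - 1)%nat with (k - S (S i))%nat in R2 by lia.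
    replace (S (k - S i)) with (k - i)%nat in R2 by lia.
    rewrite <- IH2, <- IH1 in R2. fold Y in R1.
    assert (S1 : forall P, in_open_segment Y (p (S (S i))) P -> in_open_triangle A B C P).
    { apply Hseg. lia. }
    assert (S2 : forall P, in_open_segment Y (p (k - S (S i))%nat) P -> in_open_triangle A B C P).
    { intros P HP. apply seg_sym in HP.
      assert (E : Y = p (S (k - S (S i)))) by (rewrite IH2; f_equal; lia).
      rewrite E in HP. apply (Hseg (k - S (S i))%nat); auto. lia. }
    assert (T1 := Hbd (S (S i)) ltac:(lia)).
    assert (T2 := Hbd (k - S (S i))%nat ltac:(lia)).
    destruct R1 as [R1|[R1|R1]]; destruct R2 as [R2|[R2|R2]].
    + apply (pal_same (in_open_triangle A B C) A B (p i) Y); auto.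
    + exfalso. eapply edges_AB_BC; eauto. apply (proj1 R1). apply (proj1 R2).
    + exfalso. eapply edges_AB_CA; eauto. apply (proj1 R1). apply (proj1 R2).
    + exfalso. eapply edges_AB_BC; eauto. apply (proj1 R2). apply (proj1 R1).
    + apply (pal_same (in_open_triangle A B C) B C (p i) Y); auto.
    + exfalso. eapply edges_BC_CA; eauto. apply (proj1 R1). apply (proj1 R2).
    + exfalso. eapply edges_AB_CA; eauto. apply (proj1 R2). apply (proj1 R1).
    + exfalso. eapply edges_BC_CA; eauto. apply (proj1 R2). apply (proj1 R1).
    + apply (pal_same (in_open_triangle A B C) C A (p i) Y); auto.
Qed.



Theorem mainTheorem8 (n m : nat) (A B C : pt) :
  Nat.Even n -> (1 <= m)%nat -> (m < n - 1)%nat ->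
  nondegenerate A B C ->
  angle_at A B C = PI / INR n ->
  angle_at B C A = INR m * PI / INR n ->
  ~ (exists (k : nat) (p : nat -> pt),
       billiard_path A B C k p /\ p k = A).
Proof.
  intros Hev Hm1 Hm2 ND HA HB [k [p [BP Hpk]]].
  destruct Hev as [h Hh].
  destruct (setup n m A B C Hm1 Hm2 ND HA HB) as
    (e & f & Lu & Lv & Lw & He & Hf & Hef & HLu & HLv & HLw & EAB & EAC & ECB).
  pose proof (bd A B C k p ND BP Hpk) as Hbd.
  pose proof BP as BP'. destruct BP' as (Hk & H0 & Hseg & Hrefl).
  assert (Hn : (3 <= n)%nat) by lia.
  assert (Hg : 0 < PI / INR n < PI).
  { pose proof PI_RGT_0. assert (3 <= INR n) by (replace 3 with (INR 3) by (simpl; ring); apply le_INR; auto).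
    split. apply Rdiv_lt_0_compat; lra.
    apply (Rmult_lt_reg_r (INR n)); [lra|]. unfold Rdiv. rewrite Rmult_assoc, Rinv_l by lra. nra. }
  assert (S0 : forall P, in_open_segment A (p 1%nat) P -> in_open_triangle A B C P).
  { intros P HP. rewrite <- H0 in HP. apply (Hseg 0%nat); auto; lia. }
  destruct (mid_cone A B C (p 1%nat) S0) as (b0 & c0 & Hb0 & Hc0 & E0).
  destruct (cone e f (PI / INR n) Lu Lv (vsub B A) (vsub C A) b0 c0 Hg HLu HLv EAB EAC Hb0 Hc0)
    as (r0 & t0 & Hr0 & Ht0 & F0).
  rewrite <- E0 in F0.
  assert (KEY : p 1%nat = p (k - 1)%nat /\ exists j, k = (2 * j + 1)%nat).
  { destruct (Nat.eq_dec k 1) as [->|Hk1].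
    - split. simpl. rewrite Hpk, H0; auto. exists 0%nat; lia.
    - assert (S1 : forall P, in_open_segment A (p (k - 1)%nat) P -> in_open_triangle A B C P).
      { intros P HP. apply seg_sym in HP. rewrite <- Hpk in HP.
        replace k with (S (k - 1)) in HP at 2 by lia. apply (Hseg (k - 1)%nat); auto. lia. }
      destruct (mid_cone A B C _ S1) as (b1 & c1 & Hb1 & Hc1 & E1).
      destruct (cone e f (PI / INR n) Lu Lv (vsub B A) (vsub C A) b1 c1 Hg HLu HLv EAB EAC Hb1 Hc1)
        as (r1 & t1 & Hr1 & Ht1 & F1).
      rewrite <- E1 in F1.
      assert (D := dir_all n m A B C k p e f Lu Lv Lw t0 r0 He Hf Hef ltac:(lia) HLu HLv HLw EAB EAC ECB BP Hr0).
      rewrite H0 in D. specialize (D F0 (k - 1)%nat ltac:(lia)).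
      replace (S (k - 1)) with k in D by lia. rewrite Hpk in D.
      destruct D as (c & z & Hc & Ez).
      assert (Ez2 : vsub A (p (k - 1)%nat) = vscale r1 (wv e f (t1 + PI))).
      { rewrite <- w_shift.
        replace (vscale (- r1) (wv e f t1)) with (vscale (-1) (vscale r1 (wv e f t1))) by (rewrite scale_scale; f_equal; ring).
        rewrite <- F1. destruct A, (p (k - 1)%nat); unfold vsub, vscale; simpl; f_equal; ring. }
      rewrite Ez2 in Ez.
      destruct (w_eq e f He Hf Hef _ _ _ _ Hr1 Hc Ez) as [K HK].
      assert (Heps : sg (k - 1) = 1 \/ sg (k - 1) = -1) by (destruct (sg_cases (k - 1)) as [[E _]|[E _]]; auto).
      rewrite Hh in HK, Ht0, Ht1.
      destruct (nt h t0 t1 (sg (k - 1)) z K ltac:(lia) Ht0 Ht1 Heps HK) as [Hs1 Ht].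
      split.
      + subst t1.
        apply (det (in_open_triangle A B C) A (p 1%nat) (p (k - 1)%nat) (wv e f t0) r0 r1); auto.
        all: apply Hbd; lia.
      + destruct (sg_cases (k - 1)) as [[_ [j Hj]]|[E _]]; [exists j; lia | lra]. }
  destruct KEY as [K1 [j Hj]].
  destruct (palindrome A B C k p ND BP Hpk K1 j ltac:(lia)) as [P1 _].
  replace (k - j)%nat with (S j) in P1 by lia.
  apply (Hbd j ltac:(lia)). apply (Hseg j ltac:(lia)).
  exists (/2). split; [lra|]. rewrite <- P1. destruct (p j); unfold vadd, vscale; simpl; f_equal; field.
Qed.
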